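(* Let $d\ge 1$, let $f=(f_1,\dots,f_d):\mathbb{R}^d\to\mathbb{R}^d$ be smooth, and let $\phi:\mathbb{R}^d\to\mathbb{R}$ be smooth. Let $\gamma_1$ and $\gamma_2$ be two exotic aromatic rooted forests, with node sets $V_1$ (root $r_1$, non-root nodes $V_1^0=V_1\setminus\{r_1\}$) and $V_2$ (root $r_2$, non-root nodes $V_2^0=V_2\setminus\{r_2\}$). For maps $\varphi:\pi(r_2)\to V_1$ and $\psi:\Gamma(r_2)\to V_1$, let $\gamma_{\varphi,\psi}$ be the exotic aromatic rooted forest obtained as follows: its nodes are $V_1\cup V_2^0$ (disjoint union) with root $r_1$; it contains all edges and lianas of $\gamma_1$, all edges and lianas of $\gamma_2$ not incident to $r_2$; each edge $w\to r_2$ of $\gamma_2$ (with $w\in\pi(r_2)$) is replaced by the edge $w\to\varphi(w)$; and each liana end of $\gamma_2$ located at $r_2$ (an element $e\in\Gamma(r_2)$) is moved to the node $\psi(e)\in V_1$. Then $$F(\gamma_2)\big(F(\gamma_1)(\phi)\big)=\sum_{\varphi:\pi(r_2)\to V_1}\ \sum_{\psi:\Gamma(r_2)\to V_1} F(\gamma_{\varphi,\psi})(\phi),$$ where the sums run over all maps $\varphi$ and $\psi$.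
   Context: An exotic aromatic rooted forest $\gamma$ consists of a finite set of nodes $V$ with a distinguished node $r$ (the root), write $V^0=V\setminus\{r\}$; a set of directed edges such that every node of $V^0$ has exactly one outgoing edge and the root has none (cycles, i.e. aromas, are allowed); and a finite set of lianas, each liana being an undirected edge with two ends, each end attached to a node (both ends may be attached to the same node). For a node $v$, $\pi(v)$ denotes the set of nodes $w$ having an edge $w\to v$ (predecessors of $v$), and $\Gamma(v)$ denotes the set of liana ends attached to $v$ (so lianas are counted with multiplicity: a liana with both ends at $v$ contributes two elements of $\Gamma(v)$). Each non-root node $v$ carries an index $i_v\in\{1,\dots,d\}$ and each liana $l$ carries an index $j_l\in\{1,\dots,d\}$; for a liana end $e$ belonging to liana $l$ write $j_e=j_l$. Set $\partial_{I_{\pi(v)}}=\prod_{w\in\pi(v)}\partial_{i_w}$ and $\partial_{J_{\Gamma(v)}}=\prod_{e\in\Gamma(v)}\partial_{j_e}$, where $\partial_i=\partial/\partial x_i$. The elementary differential of $\gamma$ is the linear differential operator acting on smooth $\phi:\mathbb{R}^d\to\mathbb{R}$ by $$F(\gamma)(\phi)=\sum_{(i_v)_{v\in V^0}}\ \sum_{(j_l)_{l \text{ liana}}}\Big(\prod_{v\in V^0}\partial_{I_{\pi(v)}}\partial_{J_{\Gamma(v)}} f_{i_v}\Big)\,\partial_{I_{\pi(r)}}\partial_{J_{\Gamma(r)}}\phi,$$ all indices ranging over $\{1,\dots,d\}$. *)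

(* Defs.v *)
From HB Require Import structures.
From mathcomp Require Import all_boot all_order all_algebra.
From mathcomp Require Import all_classical all_reals all_analysis.
Set Implicit Arguments. Unset Strict Implicit. Unset Printing Implicit Defensive.
Import Order.TTheory GRing.Theory Num.Theory.
Import numFieldNormedType.Exports.
Local Open Scope ring_scope.

Section Defs.
Variable R : realType.
Variable d : nat.

Definition pd (i : 'I_d) (g : 'rV[R]_d -> R) : 'rV[R]_d -> R :=
  fun x => derive g x (delta_mx 0 i).

Definition ipd (s : seq 'I_d) (g : 'rV[R]_d -> R) : 'rV[R]_d -> R :=
  foldr pd g s.

Definition smooth (g : 'rV[R]_d -> R) : Prop :=
  forall (s : seq 'I_d) (x : 'rV[R]_d), differentiable (ipd s g) x.
End Defs.

(* An exotic aromatic rooted forest: non-root nodes are 'I_nn, the root is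
   None (nodes = option 'I_nn); each non-root node w has the outgoing edge
   w -> succ w; there are nl lianas, liana l has the two ends (l,false),(l,true),
   end e being attached to node lend e. *)
Record eaforest := EAF {
  nn : nat;
  nl : nat;
  succ : 'I_nn -> option 'I_nn;
  lend : 'I_nl * bool -> option 'I_nn
}.

Section Elem.
Variable R : realType.
Variable d : nat.

(* the multiset of derivative indices I_{pi(v)} J_{Gamma(v)} at node v *)
Definition dseq (g : eaforest) (iv : {ffun 'I_(nn g) -> 'I_d})
    (jl : {ffun 'I_(nl g) -> 'I_d}) (v : option 'I_(nn g)) : seq 'I_d :=
  map iv (seq.filter (fun w => @succ g w == v) (enum 'I_(nn g)))
  ++ map (fun e : 'I_(nl g) * bool => jl e.1)
         (seq.filter (fun e => @lend g e == v) (enum {: 'I_(nl g) * bool})).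

Definition Fel (g : eaforest) (f : 'I_d -> 'rV[R]_d -> R)
    (phi : 'rV[R]_d -> R) : 'rV[R]_d -> R :=
  fun x =>
    \sum_(iv : {ffun 'I_(nn g) -> 'I_d})
    \sum_(jl : {ffun 'I_(nl g) -> 'I_d})
      ((\prod_(v : 'I_(nn g)) ipd (dseq iv jl (Some v)) (f (iv v)) x)
       * ipd (dseq iv jl None) phi x).
End Elem.

Definition rootpred (g : eaforest) := {w : 'I_(nn g) | @succ g w == None}.
Definition rootends (g : eaforest) :=
  {e : 'I_(nl g) * bool | @lend g e == None}.

(* the grafted forest gamma_{vp,ps}: nodes V1 u V2^0, i.e. non-root nodes
   'I_(nn g1 + nn g2) (lshift = V1^0, rshift = V2^0), root = root of g1;
   lianas of g1 then lianas of g2. *)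
Definition graft (g1 g2 : eaforest)
    (vp : {ffun rootpred g2 -> option 'I_(nn g1)})
    (ps : {ffun rootends g2 -> option 'I_(nn g1)}) : eaforest :=
  @EAF (nn g1 + nn g2) (nl g1 + nl g2)
    (fun k => match fintype.split k with
     | inl w => omap (lshift (nn g2)) (@succ g1 w)
     | inr w =>
         match (insub w : option (rootpred g2)) with
         | Some w' => omap (lshift (nn g2)) (vp w')
         | None => omap (@rshift (nn g1) (nn g2)) (@succ g2 w)
         end
     end)
    (fun e => match fintype.split e.1 with
     | inl l => omap (lshift (nn g2)) (@lend g1 (l, e.2))
     | inr l =>
         match (insub (l, e.2) : option (rootends g2)) with
         | Some e' => omap (lshift (nn g2)) (ps e')
         | None => omap (@rshift (nn g1) (nn g2)) (@lend g2 (l, e.2))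
         end
     end).

(* Main.v *)
Require Import Defs.
From HB Require Import structures.
From mathcomp Require Import all_boot all_order all_algebra.
From mathcomp Require Import all_classical all_reals all_analysis.
From mathcomp Require Import ring lra.
Import Order.TTheory GRing.Theory Num.Theory.
Import numFieldNormedType.Exports.
Local Open Scope classical_set_scope.
Local Open Scope ring_scope.

Section Clairaut.
Variable R : realType.
Variable n : nat.
Local Notation V := 'rV[R]_n.

Lemma line_dq (g : V -> R) (p w : V) (s : R) :
  (fun h : R => h^-1 *: (((fun t : R => g (p + t *: w)) \o shift s) (h *: 1) - (fun t : R => g (p + t *: w)) s))
  = (fun h : R => h^-1 *: ((g \o shift (p + s *: w)) (h *: w) - g (p + s *: w))).
Proof.
apply/funext => h /=; congr (_ *: (g _ - _)).
rewrite /shift /= scalerDl.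
have -> : h *: (1 : R) = h by rewrite /GRing.scale /= mulr1.
by rewrite addrCA addrA.
Qed.

Lemma line_is_derive (g : V -> R) (p w : V) (s : R) :
  derivable g (p + s *: w) w ->
  is_derive s 1 (fun t : R => g (p + t *: w)) ('D_w g (p + s *: w)).
Proof.
move=> dg.
have db : derivable (fun t : R => g (p + t *: w)) s 1.
  by rewrite /derivable line_dq.
have -> : 'D_w g (p + s *: w) = 'D_1 (fun t : R => g (p + t *: w)) s.
  by rewrite /derive line_dq.
exact: derivableP.
Qed.

Lemma mvt0 (h dh : R -> R) (t : R) : 0 < t ->
  (forall s : R, is_derive s (1:R) h (dh s)) ->
  exists2 s, 0 < s < t & h t - h 0 = dh s * t.
Proof.
move=> t0 hd.
have cont : {within `[0, t], continuous h}.
  apply: continuous_subspaceT => s.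
  apply: differentiable_continuous; apply/derivable1_diffP.
  by case: (hd s).
have [s sI Hs] := MVT t0 (fun s _ => hd s) cont.
exists s; first by move: sI; rewrite in_itv.
by rewrite Hs subr0.
Qed.

Lemma cl_step (g : V -> R) (u v x : V) (t : R) :
  (forall y, differentiable g y) ->
  (forall y, differentiable ('D_u g) y) ->
  0 < t ->
  exists s r, [/\ 0 < s < t, 0 < r < t &
    g (x + t *: v + t *: u) - g (x + t *: u) - (g (x + t *: v) - g x)
    = 'D_v ('D_u g) (x + s *: u + r *: v) * (t * t)].
Proof.
move=> dg dDu t0.
pose phi : R -> R := fun s : R => g (x + t *: v + s *: u) - g (x + s *: u).
have phid : forall s : R, is_derive s (1:R) phi
    ('D_u g (x + t *: v + s *: u) - 'D_u g (x + s *: u)).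
  move=> s.
  have d1 : derivable g (x + t *: v + s *: u) u by apply: diff_derivable.
  have d2 : derivable g (x + s *: u) u by apply: diff_derivable.
  exact (is_deriveB (line_is_derive _ _ _ _ d1) (line_is_derive _ _ _ _ d2)).
have [s sI Hs] := @mvt0 _ _ t t0 phid.
pose psi := fun r : R => 'D_u g (x + s *: u + r *: v).
have psid : forall r : R, is_derive r (1:R) psi ('D_v ('D_u g) (x + s *: u + r *: v)).
  move=> r; apply: line_is_derive; exact: diff_derivable.
have [r rI Hr] := @mvt0 _ _ t t0 psid.
exists s, r; split => //.
move: Hs; rewrite /phi !scale0r !addr0 => ->.
rewrite mulrA -Hr /psi scale0r addr0.
by rewrite (addrAC x (t *: v)).
Qed.

Lemma clairaut (g : V -> R) (u v x : V) :
  (forall y, differentiable g y) ->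
  (forall y, differentiable ('D_u g) y) ->
  (forall y, differentiable ('D_v g) y) ->
  {for x, continuous ('D_v ('D_u g))} ->
  {for x, continuous ('D_u ('D_v g))} ->
  'D_v ('D_u g) x = 'D_u ('D_v g) x.
Proof.
move=> dg dDu dDv cA cB.
set A := 'D_v ('D_u g); set B := 'D_u ('D_v g).
have key : forall t, 0 < t -> exists s r s' r',
   [/\ 0 < s < t, 0 < r < t, 0 < s' < t, 0 < r' < t &
    A (x + s *: u + r *: v) = B (x + s' *: v + r' *: u)].
  move=> t t0.
  have [s [r [sI rI E1]]] := @cl_step g u v x t dg dDu t0.
  have [s' [r' [sI' rI' E2]]] := @cl_step g v u x t dg dDv t0.
  exists s, r, s', r'; split; try assumption.
  have tt0 : t * t != 0 by rewrite mulf_neq0 // gt_eqF.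
  have gen : forall a b c d : R, a - b - (c - d) = a - c - (b - d).
    by move=> a b c d; ring.
  apply: (mulIf tt0); apply: etrans (esym E1) _; apply: etrans _ E2.
  rewrite [x + t *: u + t *: v]addrAC; exact: gen.
apply/eqP; apply/negPn/negP => neq.
have e0 : 0 < `|A x - B x| / 2 by rewrite divr_gt0 // normr_gt0 subr_eq0.
set e := `|A x - B x| / 2 in e0.
move: (cA) => /cvgr_dist_lt /(_ _ e0) /nbhs_normP [dA dA0 HA].
move: (cB) => /cvgr_dist_lt /(_ _ e0) /nbhs_normP [dB dB0 HB].
set M := `|u| + `|v| + 1.
have M0 : 0 < M by rewrite /M ltr_wpDl // addr_ge0.
set t := Num.min dA dB / M.
have t0 : 0 < t by rewrite divr_gt0 // lt_min dA0.
have tM : t * M <= Num.min dA dB by rewrite /t divfK // gt_eqF.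
have bnd : forall a b (p q : V), 0 < a < t -> 0 < b < t ->
    `|p| + `|q| + 1 = M ->
    `|x - (x + a *: p + b *: q)| < Num.min dA dB.
  move=> a b p q /andP[a0 at_] /andP[b0 bt] HM.
  have -> : x - (x + a *: p + b *: q) = - (a *: p + b *: q).
    by rewrite -addrA opprD addrA subrr add0r.
  rewrite normrN; apply: (le_lt_trans (ler_normD _ _)).
  rewrite !normrZ !gtr0_norm //.
  apply: (lt_le_trans _ tM); rewrite -HM.
  rewrite !mulrDr mulr1.
  apply: (@le_lt_trans _ _ (t * `|p| + t * `|q|)).
    by apply: lerD; apply: ler_wpM2r => //; apply: ltW.
  by rewrite ltrDl.
have [s [r [s' [r' [sI rI sI' rI' E]]]]] := key t t0.
have h1 : `|A x - A (x + s *: u + r *: v)| < e.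
  apply: HA; have := bnd _ _ _ _ sI rI erefl; by rewrite lt_min => /andP[].
have h2 : `|B x - B (x + s' *: v + r' *: u)| < e.
  have hm : `|v| + `|u| + 1 = M by rewrite /M (addrC `|v|).
  apply: HB; have := bnd _ _ _ _ sI' rI' hm; by rewrite lt_min => /andP[].
have gen2 : forall a b c d eps : R, `|a - c| < eps -> `|b - d| < eps -> c = d ->
    `|a - b| < eps + eps.
  move=> a b c d eps ha hb cd.
  have -> : a - b = (a - c) - (b - d) by rewrite cd; ring.
  by apply: (le_lt_trans (ler_normB _ _)); apply: ltrD.
move: (gen2 _ _ _ _ _ h1 h2 E).
by rewrite /e -splitr ltxx.
Qed.
End Clairaut.

Section Calc.
Variable R : realType.
Variable d : nat.
Local Notation V := 'rV[R]_d.
Implicit Types (g : V -> R) (s t : seq 'I_d).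

Lemma ipd_cat s t g : ipd (s ++ t) g = ipd s (ipd t g).
Proof. by rewrite /ipd foldr_cat. Qed.

Lemma ipd_cons i s g : ipd (i :: s) g = pd i (ipd s g).
Proof. by []. Qed.

Lemma smooth_ipd s g : smooth g -> smooth (ipd s g).
Proof. by move=> sg t y; rewrite -ipd_cat; apply: sg. Qed.

Lemma smooth_diff g y : smooth g -> differentiable g y.
Proof. by move=> sg; apply: (sg [::]). Qed.

Lemma pd_comm i j g : smooth g -> pd i (pd j g) = pd j (pd i g).
Proof.
move=> sg; apply/funext => x.
apply: (@clairaut R d g (delta_mx 0 j) (delta_mx 0 i) x).
- by move=> y; exact: (sg [::] y).
- by move=> y; exact: (sg [:: j] y).
- by move=> y; exact: (sg [:: i] y).
- by apply: differentiable_continuous; exact: (sg [:: i; j] x).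
- by apply: differentiable_continuous; exact: (sg [:: j; i] x).
Qed.

Lemma ipd_front a i b g : smooth g -> ipd (a ++ i :: b) g = ipd (i :: a ++ b) g.
Proof.
move=> sg; elim: a => [|y a IH] //.
rewrite !cat_cons !ipd_cons IH ipd_cons pd_comm //.
exact: smooth_ipd.
Qed.

Lemma ipd_perm s t g : smooth g -> perm_eq s t -> ipd s g = ipd t g.
Proof.
move=> sg; elim: s t => [|i s IH] t.
  by move=> /perm_size/esym/size0nil ->.
move=> pst.
have it : i \in t by rewrite -(perm_mem pst) mem_head.
move: pst; case/splitPr: it => a b pst.
rewrite ipd_front // !ipd_cons (IH (a ++ b)) //.
have : perm_eq (i :: s) (i :: a ++ b).
  apply: (perm_trans pst).
  by rewrite -cat1s -[i :: a ++ b]cat1s perm_catCA.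
by rewrite perm_cons.
Qed.


Lemma diff_sum (T : Type) (r : seq T) (F : T -> V -> R) y :
  (forall a, differentiable (F a) y) ->
  differentiable (fun z => \sum_(a <- r) F a z) y.
Proof.
move=> dF; elim: r => [|a r IH].
  rewrite (_ : (fun z => _) = cst 0); first exact: differentiable_cst.
  by apply/funext => z; rewrite big_nil.
rewrite (_ : (fun z => _) = F a + (fun z => \sum_(b <- r) F b z)).
  exact: differentiableD.
by apply/funext => z; rewrite big_cons.
Qed.

Lemma diff_prod (T : Type) (r : seq T) (F : T -> V -> R) y :
  (forall a, differentiable (F a) y) ->
  differentiable (fun z => \prod_(a <- r) F a z) y.
Proof.
move=> dF; elim: r => [|a r IH].
  rewrite (_ : (fun z => _) = cst 1); first exact: differentiable_cst.
  by apply/funext => z; rewrite big_nil.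
rewrite (_ : (fun z => _) = F a * (fun z => \prod_(b <- r) F b z)).
  exact: differentiableM.
by apply/funext => z; rewrite big_cons.
Qed.

Lemma pd_sum (T : Type) (r : seq T) (F : T -> V -> R) i y :
  (forall a, differentiable (F a) y) ->
  pd i (fun z => \sum_(a <- r) F a z) y = \sum_(a <- r) pd i (F a) y.
Proof.
move=> dF; elim: r => [|a r IH].
  rewrite big_nil (_ : (fun z => _) = cst 0); first exact: derive_cst.
  by apply/funext => z; rewrite big_nil.
rewrite big_cons -IH.
rewrite (_ : (fun z => _) = F a + (fun z => \sum_(b <- r) F b z)); last first.
  by apply/funext => z; rewrite big_cons.
rewrite /pd deriveD //; apply: diff_derivable => //; exact: diff_sum.
Qed.

Lemma scaleRE (a b : R) : a *: b = a * b.
Proof. by []. Qed.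

Lemma pd_prod (K : eqType) (r : seq K) (h : K -> V -> R) i y :
  uniq r -> (forall k, differentiable (h k) y) ->
  pd i (fun z => \prod_(k <- r) h k z) y =
  \sum_(k0 <- r) \prod_(k <- r) (if k == k0 then pd i (h k) y else h k y).
Proof.
move=> + dh; elim: r => [|a r IH] /=.
  move=> _; rewrite big_nil (_ : (fun z => _) = cst 1); first exact: derive_cst.
  by apply/funext => z; rewrite big_nil.
move=> /andP[anr ur].
rewrite (_ : (fun z => _) = h a * (fun z => \prod_(b <- r) h b z)); last first.
  by apply/funext => z; rewrite big_cons.
rewrite /pd deriveM; first last.
- by apply: diff_derivable; exact: diff_prod.
- exact: diff_derivable.
rewrite !scaleRE -/(pd i _ y) (IH ur) big_cons big_cons eqxx addrC.
congr (_ + _).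
  rewrite mulrC; congr (_ * _); rewrite big_seq [RHS]big_seq.
  apply: eq_bigr => k kr; suff -> : (k == a) = false by [].
  by apply/eqP => ka; move: anr; rewrite -ka kr.
rewrite big_distrr /= big_seq [RHS]big_seq; apply: eq_bigr => k0 k0r.
rewrite big_cons; suff -> : (a == k0) = false by [].
by apply/eqP => ka; move: anr; rewrite ka k0r.
Qed.

Definition fcons n (K : finType) (k0 : K) (c : {ffun 'I_n -> K}) :
  {ffun 'I_n.+1 -> K} := [ffun i => if unlift ord0 i is Some j then c j else k0].
Arguments fcons {n K}.

Lemma fcons_lift n (K : finType) (k0 : K) (c : {ffun 'I_n -> K}) (j : 'I_n) :
  fcons k0 c (lift ord0 j) = c j.
Proof. by rewrite ffunE liftK. Qed.

Lemma sum_ffunS n (K : finType) (G : {ffun 'I_n.+1 -> K} -> R) :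
  \sum_(c : {ffun 'I_n.+1 -> K}) G c =
  \sum_(k0 : K) \sum_(c : {ffun 'I_n -> K}) G (fcons k0 c).
Proof.
rewrite pair_bigA /=.
rewrite (reindex (fun p : K * {ffun 'I_n -> K} => fcons p.1 p.2)) //.
exists (fun c : {ffun 'I_n.+1 -> K} => (c ord0, [ffun j : 'I_n => c (lift ord0 j)])).
  move=> [k c] _ /=; congr pair.
    by rewrite ffunE unlift_none.
  by apply/ffunP => j; rewrite !ffunE liftK.
move=> c _; apply/ffunP => i; rewrite ffunE /=.
by case: unliftP => [j ->|->]; rewrite ?ffunE.
Qed.


Lemma leibniz n (A K : finType) (H : A -> K -> V -> R) (lab : 'I_n -> 'I_d) :
  (forall a k, smooth (H a k)) ->
  ipd (map lab (enum 'I_n)) (fun y => \sum_(a : A) \prod_(k : K) H a k y) =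
  (fun y => \sum_(a : A) \sum_(c : {ffun 'I_n -> K})
      \prod_(k : K) ipd (map lab [seq i <- enum 'I_n | c i == k]) (H a k) y).
Proof.
move=> sH; elim: n lab => [|n IH] lab.
  rewrite enum_ord0 /=; apply/funext => y; apply: eq_bigr => a _.
  rewrite sumr_const card_ffun card_ord expn0 mulr1n.
  by [].
rewrite enum_ordSl map_cons ipd_cons -map_comp IH; apply/funext => y.
rewrite pd_sum; last first.
  move=> a; apply: diff_sum => c; apply: diff_prod => k.
  by apply: smooth_diff; apply: smooth_ipd.
apply: eq_bigr => a _.
rewrite pd_sum; last first.
  move=> c; apply: diff_prod => k.
  by apply: smooth_diff; apply: smooth_ipd.
rewrite sum_ffunS exchange_big /=.
apply: eq_bigr => c _.
rewrite pd_prod; first last.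
- by move=> k; apply: smooth_diff; apply: smooth_ipd.
- exact: index_enum_uniq.
apply: eq_bigr => k0 _; apply: eq_bigr => k _.
rewrite ffunE unlift_none filter_map.
have -> : [seq i <- enum 'I_n | preim (lift ord0) (fun i => fcons k0 c i == k) i]
    = [seq i <- enum 'I_n | c i == k].
  apply: eq_filter => j; exact (congr1 (fun z => z == k) (@fcons_lift _ _ k0 c j)).
rewrite eq_sym; case: eqP => _; by rewrite ?map_cons -map_comp.
Qed.

End Calc.

Section Comb.
Variable R : realType.

Lemma big_option_prod (T : finType) (F : option T -> R) :
  \prod_(k : option T) F k = F None * \prod_(v : T) F (Some v).
Proof.
by rewrite ![index_enum _]unlock [@Finite.enum in LHS]unlock /= big_cons big_map.
Qed.

Definition fglue (A B K : finType) (a : {ffun A -> K}) (b : {ffun B -> K}) :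
  {ffun A + B -> K} := [ffun z => match z with inl x => a x | inr y => b y end].
Arguments fglue {A B K}.

Lemma sum_ffun_glue (A B K : finType) (G : {ffun A + B -> K} -> R) :
  \sum_(c : {ffun A + B -> K}) G c =
  \sum_(a : {ffun A -> K}) \sum_(b : {ffun B -> K}) G (fglue a b).
Proof.
rewrite pair_bigA /=.
rewrite (reindex (fun p : {ffun A -> K} * {ffun B -> K} => fglue p.1 p.2)) //.
exists (fun c : {ffun A + B -> K} =>
   ([ffun x : A => c (inl x)], [ffun y : B => c (inr y)])).
  by move=> [a b] _ /=; congr pair; apply/ffunP => z; rewrite !ffunE.
by move=> c _; apply/ffunP => -[x|y]; rewrite !ffunE.
Qed.

Definition fjoin m n (K : finType) (a : {ffun 'I_m -> K}) (b : {ffun 'I_n -> K}) :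
  {ffun 'I_(m + n) -> K} :=
  [ffun i => match fintype.split i with inl x => a x | inr y => b y end].
Arguments fjoin {m n K}.

Lemma fjoin_l m n (K : finType) (a : {ffun 'I_m -> K}) (b : {ffun 'I_n -> K}) (i : 'I_m) :
  fjoin a b (lshift n i) = a i.
Proof. by rewrite ffunE (unsplitK (inl i)). Qed.

Lemma fjoin_r m n (K : finType) (a : {ffun 'I_m -> K}) (b : {ffun 'I_n -> K}) (i : 'I_n) :
  fjoin a b (rshift m i) = b i.
Proof. by rewrite ffunE (unsplitK (inr i)). Qed.

Lemma sum_ffun_join m n (K : finType) (G : {ffun 'I_(m + n) -> K} -> R) :
  \sum_(c : {ffun 'I_(m + n) -> K}) G c =
  \sum_(a : {ffun 'I_m -> K}) \sum_(b : {ffun 'I_n -> K}) G (fjoin a b).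
Proof.
rewrite pair_bigA /=.
rewrite (reindex (fun p : {ffun 'I_m -> K} * {ffun 'I_n -> K} => fjoin p.1 p.2)) //.
exists (fun c : {ffun 'I_(m + n) -> K} =>
   ([ffun x => c (lshift n x)], [ffun y => c (rshift m y)])).
  move=> [a b] _ /=; congr pair; apply/ffunP => z; rewrite ffunE.
    exact: fjoin_l.
  exact: fjoin_r.
move=> c _; apply/ffunP => i; rewrite ffunE.
by case: fintype.split_ordP => j ->; rewrite ffunE ?fjoin_l ?fjoin_r.
Qed.

Lemma sum_ffun_bij (E E' K : finType) (h : E -> E') (h' : E' -> E) :
  cancel h h' -> cancel h' h -> forall (G : {ffun E -> K} -> R),
  \sum_(c : {ffun E -> K}) G c = \sum_(c : {ffun E' -> K}) G [ffun e => c (h e)].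
Proof.
move=> hK h'K G.
rewrite (reindex (fun c : {ffun E' -> K} => [ffun e => c (h e)])) //.
exists (fun c : {ffun E -> K} => [ffun e' => c (h' e')]).
  by move=> c _; apply/ffunP => e'; rewrite !ffunE h'K.
by move=> c _; apply/ffunP => e; rewrite !ffunE hK.
Qed.

End Comb.

Arguments fjoin {m n K}.
Arguments fglue {A B K}.

Lemma count_enumT (T : finType) (a : pred T) :
  count a (enum T) = \sum_(t : T | a t) 1.
Proof. by rewrite -sum1_count enumT [index_enum _]unlock. Qed.

Lemma count_ms (d : nat) (T : finType) (Q : pred T) (h : T -> 'I_d) (P : pred 'I_d) :
  count P (map h [seq t <- enum T | Q t]) = \sum_(t : T | Q t) (P (h t) : nat).
Proof.
rewrite count_map count_filter count_enumT (eq_bigl (fun t => Q t && P (h t))).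
  by rewrite big_mkcondr; apply: eq_bigr => t _; case: (P (h t)).
by move=> t /=; rewrite andbC.
Qed.

Lemma count_dseq d (g : eaforest) (iv : {ffun 'I_(nn g) -> 'I_d})
    (jl : {ffun 'I_(nl g) -> 'I_d}) v (P : pred 'I_d) :
  count P (dseq iv jl v) =
  \sum_(w | @succ g w == v) (P (iv w) : nat) +
  \sum_(e : 'I_(nl g) * bool | @lend g e == v) (P (jl e.1) : nat).
Proof. by rewrite /dseq count_cat !count_ms. Qed.

Lemma sum_pair_split m n (B : finType) (Q : pred ('I_(m + n) * B))
    (F : 'I_(m + n) * B -> nat) :
  \sum_(e | Q e) F e =
  \sum_(e : 'I_m * B | Q (lshift n e.1, e.2)) F (lshift n e.1, e.2) +
  \sum_(e : 'I_n * B | Q (rshift m e.1, e.2)) F (rshift m e.1, e.2).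
Proof.
rewrite (eq_bigl (fun e => true && Q (e.1, e.2))); last by case.
rewrite (eq_bigr (fun e => F (e.1, e.2))); last by case.
rewrite -(pair_big_dep xpredT (fun a b => Q (a, b)) (fun a b => F (a, b))).
rewrite big_split_ord /= !pair_big_dep /=.
by [].
Qed.

Lemma sum_sub (T : finType) (Q : pred T) (Rp : pred {x | Q x}) (F : T -> nat) :
  \sum_(w : {x | Q x} | Rp w) F (val w) =
  \sum_(x : T | if (insub x : option {x | Q x}) is Some w then Rp w else false) F x.
Proof.
rewrite [RHS](reindex_omap (val : {x | Q x} -> T) insub).
  apply: eq_bigl => w; rewrite valK eqxx andbT.
  by [].
by move=> x; case: insubP => // w _ <-.
Qed.

Lemma Some_eqE (T : eqType) (a b : T) : (Some a == Some b) = (a == b).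
Proof. by []. Qed.

Lemma omap_lshift_eq m n (x y : option 'I_m) :
  (omap (lshift n) x == omap (lshift n) y) = (x == y).
Proof. by case: x; case: y => //= a b; rewrite eq_lshift. Qed.

Definition labE (g2 : eaforest) d (iv2 : {ffun 'I_(nn g2) -> 'I_d})
   (jl2 : {ffun 'I_(nl g2) -> 'I_d}) (e : (rootpred g2 + rootends g2)%type) : 'I_d :=
  match e with inl w => iv2 (val w) | inr e' => jl2 (val e').1 end.
Arguments labE {g2 d}.

Section Graft.
Variables (g1 g2 : eaforest).
Variables (vp : {ffun rootpred g2 -> option 'I_(nn g1)})
          (ps : {ffun rootends g2 -> option 'I_(nn g1)}).

Lemma succG_l (w : 'I_(nn g1)) :
  @succ (graft vp ps) (lshift (nn g2) w) = omap (lshift (nn g2)) (@succ g1 w).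
Proof. by rewrite /= (unsplitK (inl w)). Qed.

Lemma succG_r (w : 'I_(nn g2)) :
  @succ (graft vp ps) (rshift (nn g1) w) =
  match (insub w : option (rootpred g2)) with
  | Some w' => omap (lshift (nn g2)) (vp w')
  | None => omap (@rshift (nn g1) (nn g2)) (@succ g2 w) end.
Proof. by rewrite /= (unsplitK (inr w)). Qed.

Lemma lendG_l (l : 'I_(nl g1)) b :
  @lend (graft vp ps) (lshift (nl g2) l, b) = omap (lshift (nn g2)) (@lend g1 (l, b)).
Proof. by rewrite /= (unsplitK (inl l)). Qed.

Lemma lendG_r (l : 'I_(nl g2)) b :
  @lend (graft vp ps) (rshift (nl g1) l, b) =
  match (insub (l, b) : option (rootends g2)) with
  | Some e' => omap (lshift (nn g2)) (ps e')
  | None => omap (@rshift (nn g1) (nn g2)) (@lend g2 (l, b)) end.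
Proof. by rewrite /= (unsplitK (inr l)). Qed.


Variable d : nat.
Variables (iv1 : {ffun 'I_(nn g1) -> 'I_d}) (iv2 : {ffun 'I_(nn g2) -> 'I_d})
          (jl1 : {ffun 'I_(nl g1) -> 'I_d}) (jl2 : {ffun 'I_(nl g2) -> 'I_d}).

Lemma cntG_nodes (v : option 'I_(nn (graft vp ps))) (P : pred 'I_d) :
  \sum_(w : 'I_(nn (graft vp ps)) | @succ (graft vp ps) w == v)
      (P (fjoin iv1 iv2 w) : nat) =
  \sum_(w : 'I_(nn g1) | omap (lshift (nn g2)) (@succ g1 w) == v) (P (iv1 w) : nat) +
  \sum_(w : 'I_(nn g2) | match (insub w : option (rootpred g2)) with
      | Some w' => omap (lshift (nn g2)) (vp w') == v
      | None => omap (@rshift (nn g1) (nn g2)) (@succ g2 w) == v end)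
     (P (iv2 w) : nat).
Proof.
rewrite big_split_ord; congr (_ + _); apply: eq_big => w.
- by rewrite succG_l.
- by rewrite fjoin_l.
- by rewrite succG_r; case: (insub w).
- by rewrite fjoin_r.
Qed.

Lemma cntG_lianas (v : option 'I_(nn (graft vp ps))) (P : pred 'I_d) :
  \sum_(e : 'I_(nl (graft vp ps)) * bool | @lend (graft vp ps) e == v)
      (P (fjoin jl1 jl2 e.1) : nat) =
  \sum_(e : 'I_(nl g1) * bool | omap (lshift (nn g2)) (@lend g1 e) == v) (P (jl1 e.1) : nat) +
  \sum_(e : 'I_(nl g2) * bool | match (insub e : option (rootends g2)) with
      | Some e' => omap (lshift (nn g2)) (ps e') == v
      | None => omap (@rshift (nn g1) (nn g2)) (@lend g2 e) == v end)
     (P (jl2 e.1) : nat).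
Proof.
rewrite sum_pair_split; congr (_ + _); apply: eq_big => -[l b].
- by rewrite lendG_l.
- by rewrite fjoin_l.
- by rewrite lendG_r; case: (insub (l, b)).
- by rewrite fjoin_r.
Qed.


Lemma perm_r (v2 : 'I_(nn g2)) :
  perm_eq (dseq (g := graft vp ps) (fjoin iv1 iv2) (fjoin jl1 jl2)
                (Some (rshift (nn g1) v2)))
          (dseq iv2 jl2 (Some v2)).
Proof.
apply/permP => P; rewrite !count_dseq cntG_nodes cntG_lianas.
rewrite big_pred0; last first.
  by move=> w; case: (@succ g1 w) => //= j; rewrite Some_eqE eq_lrshift.
rewrite [X in _ + (X + _)]big_pred0; last first.
  by move=> e; case: (@lend g1 e) => //= j; rewrite Some_eqE eq_lrshift.
rewrite !add0r; congr (_ + _); apply: eq_bigl => w.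
  case: insubP => [w' Hw _|Hn].
    rewrite (eqP Hw); case: (vp w') => //= j; by rewrite Some_eqE eq_lrshift.
  by case: (@succ g2 w) => //= j; rewrite Some_eqE eq_rshift.
case: insubP => [w' Hw _|Hn].
  rewrite (eqP Hw); case: (ps w') => //= j; by rewrite Some_eqE eq_lrshift.
by case: (@lend g2 w) => //= j; rewrite Some_eqE eq_rshift.
Qed.

Lemma perm_l (k : option 'I_(nn g1)) :
  perm_eq (dseq (g := graft vp ps) (fjoin iv1 iv2) (fjoin jl1 jl2)
                (omap (lshift (nn g2)) k))
          (map (labE iv2 jl2)
             [seq e <- enum {: rootpred g2 + rootends g2} | fglue vp ps e == k]
           ++ dseq iv1 jl1 k).
Proof.
apply/permP => P; rewrite [in LHS]count_dseq count_cat count_dseq cntG_nodes cntG_lianas count_ms.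
have eA1 : \sum_(w | omap (lshift (nn g2)) (@succ g1 w) == omap (lshift (nn g2)) k)
    (P (iv1 w) : nat) = \sum_(w | @succ g1 w == k) (P (iv1 w) : nat).
  by apply: eq_bigl => w; rewrite omap_lshift_eq.
have eB1 : \sum_(e | omap (lshift (nn g2)) (@lend g1 e) == omap (lshift (nn g2)) k)
    (P (jl1 e.1) : nat) = \sum_(e | @lend g1 e == k) (P (jl1 e.1) : nat).
  by apply: eq_bigl => w; rewrite omap_lshift_eq.
have eA2 : \sum_(w : 'I_(nn g2) | match (insub w : option (rootpred g2)) with
      | Some w' => omap (lshift (nn g2)) (vp w') == omap (lshift (nn g2)) k
      | None => omap (@rshift (nn g1) (nn g2)) (@succ g2 w) == omap (lshift (nn g2)) k end)
     (P (iv2 w) : nat) = \sum_(w : rootpred g2 | vp w == k) (P (iv2 (val w)) : nat).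
  rewrite (@sum_sub _ _ (fun w => vp w == k) (fun w => (P (iv2 w) : nat))).
  apply: eq_bigl => w; case: insubP => [w' _ _|Hn].
    by rewrite omap_lshift_eq.
  case: (@succ g2 w) Hn => //= j _; case: (k) => //= k'.
  by rewrite Some_eqE eq_rlshift.
have eB2 : \sum_(e : 'I_(nl g2) * bool | match (insub e : option (rootends g2)) with
      | Some e' => omap (lshift (nn g2)) (ps e') == omap (lshift (nn g2)) k
      | None => omap (@rshift (nn g1) (nn g2)) (@lend g2 e) == omap (lshift (nn g2)) k end)
     (P (jl2 e.1) : nat) = \sum_(e : rootends g2 | ps e == k) (P (jl2 (val e).1) : nat).
  rewrite (@sum_sub _ _ (fun w => ps w == k) (fun e => (P (jl2 e.1) : nat))).
  apply: eq_bigl => w; case: insubP => [w' _ _|Hn].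
    by rewrite omap_lshift_eq.
  case: (@lend g2 w) Hn => //= j _; case: (k) => //= k'.
  by rewrite Some_eqE eq_rlshift.
have eM : \sum_(e : (rootpred g2 + rootends g2)%type | fglue vp ps e == k)
      (P (labE iv2 jl2 e) : nat) =
    \sum_(w : rootpred g2 | vp w == k) (P (iv2 (val w)) : nat) +
    \sum_(e : rootends g2 | ps e == k) (P (jl2 (val e).1) : nat).
  by rewrite big_sumType; congr (_ + _); apply: eq_bigl => w; rewrite ffunE.
rewrite eA1 eB1 eA2 eB2 eM.
by rewrite addrACA addrC.
Qed.

End Graft.

Section LE.
Variable R : realType.
Variable d : nat.
Local Notation V := 'rV[R]_d.

Lemma smooth_sp (A K : finType) (H : A -> K -> V -> R) :
  (forall a k, smooth (H a k)) -> smooth (fun y => \sum_(a : A) \prod_(k : K) H a k y).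
Proof.
move=> sH s y.
have := @leibniz R d (size s) A K H (tnth (in_tuple s)) sH.
rewrite map_tnth_enum => ->.
apply: diff_sum => a; apply: diff_sum => c; apply: diff_prod => k.
by apply: smooth_diff; apply: smooth_ipd.
Qed.

Lemma perm_enum_val (E : finType) :
  perm_eq (map (@enum_val _ (pred_of_argType E)) (enum 'I_#|E|)) (enum E).
Proof.
apply: uniq_perm.
- by rewrite map_inj_uniq ?enum_uniq //; exact: enum_val_inj.
- exact: enum_uniq.
move=> e; rewrite mem_enum; apply/mapP; exists (enum_rank e).
  by rewrite mem_enum.
by rewrite enum_rankK.
Qed.

Lemma leibE (E A K : finType) (H : A -> K -> V -> R) (lab : E -> 'I_d) :
  (forall a k, smooth (H a k)) ->
  ipd (map lab (enum E)) (fun y => \sum_(a : A) \prod_(k : K) H a k y) =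
  (fun y => \sum_(a : A) \sum_(c : {ffun E -> K})
      \prod_(k : K) ipd (map lab [seq e <- enum E | c e == k]) (H a k) y).
Proof.
move=> sH.
have pe : perm_eq (map lab (enum E)) (map (lab \o enum_val) (enum 'I_#|E|)).
  by rewrite map_comp perm_map // perm_sym perm_enum_val.
rewrite (@ipd_perm R d _ _ _ (@smooth_sp A K H sH) pe).
rewrite (@leibniz R d _ A K H _ sH); apply/funext => y; apply: eq_bigr => a _.
rewrite (@sum_ffun_bij R _ _ _ enum_val enum_rank); first last.
- exact: enum_rankK.
- exact: enum_valK.
apply: eq_bigr => c _; apply: eq_bigr => k _.
apply: (congr1 (fun F : V -> R => F y)); apply: ipd_perm; first exact: sH.
rewrite map_comp; apply: perm_map.
rewrite (@eq_filter _ _ (preim enum_val (fun e => c e == k))); last first.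
  by move=> i /=; rewrite ffunE.
rewrite -filter_map; apply: perm_filter.
exact: perm_enum_val.
Qed.

End LE.

Lemma reorder (R : realType) (A1 A2 B1 B2 VP PS : finType)
    (Z : A1 -> A2 -> B1 -> B2 -> VP -> PS -> R) :
  \sum_(a2 : A2) \sum_(b2 : B2) \sum_(p : A1 * B1) \sum_(vp : VP) \sum_(ps : PS)
      Z p.1 a2 p.2 b2 vp ps =
  \sum_(vp : VP) \sum_(ps : PS) \sum_(a1 : A1) \sum_(a2 : A2) \sum_(b1 : B1)
      \sum_(b2 : B2) Z a1 a2 b1 b2 vp ps.
Proof.
transitivity (\sum_(a2 : A2) \sum_(b2 : B2) \sum_(a1 : A1) \sum_(b1 : B1)
   \sum_(vp : VP) \sum_(ps : PS) Z a1 a2 b1 b2 vp ps).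
  apply: eq_bigr => a2 _; apply: eq_bigr => b2 _.
  by rewrite -(pair_bigA _ (fun a1 b1 => \sum_(vp : VP) \sum_(ps : PS) Z a1 a2 b1 b2 vp ps)).
under eq_bigr => a2 _ do under eq_bigr => b2 _ do under eq_bigr => a1 _ do
  rewrite exchange_big.
under eq_bigr => a2 _ do under eq_bigr => b2 _ do under eq_bigr => a1 _ do
  under eq_bigr => vp _ do rewrite exchange_big.
under eq_bigr => a2 _ do under eq_bigr => b2 _ do rewrite exchange_big.
under eq_bigr => a2 _ do under eq_bigr => b2 _ do under eq_bigr => vp _ do
  rewrite exchange_big.
under eq_bigr => a2 _ do rewrite exchange_big.
under eq_bigr => a2 _ do under eq_bigr => vp _ do rewrite exchange_big.
rewrite exchange_big.
under eq_bigr => vp _ do rewrite exchange_big.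
under eq_bigr => vp _ do under eq_bigr => ps _ do under eq_bigr => a2 _ do
  rewrite exchange_big.
under eq_bigr => vp _ do under eq_bigr => ps _ do rewrite exchange_big.
under eq_bigr => vp _ do under eq_bigr => ps _ do under eq_bigr => a1 _ do
  under eq_bigr => a2 _ do rewrite exchange_big.
by [].
Qed.

Section Final.
Variable R : realType.
Variable d : nat.
Local Notation V := 'rV[R]_d.
Variables (f : 'I_d -> V -> R) (phi : V -> R).
Hypotheses (hf : forall i, smooth (f i)) (hphi : smooth phi).
Variables (g1 g2 : eaforest).

Definition Hf (p : {ffun 'I_(nn g1) -> 'I_d} * {ffun 'I_(nl g1) -> 'I_d})
    (k : option 'I_(nn g1)) : V -> R :=
  match k with
  | Some v => ipd (dseq p.1 p.2 k) (f (p.1 v))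
  | None => ipd (dseq p.1 p.2 None) phi end.

Lemma HfS p v : Hf p (Some v) = ipd (dseq p.1 p.2 (Some v)) (f (p.1 v)).
Proof. by []. Qed.
Lemma HfN p : Hf p None = ipd (dseq p.1 p.2 None) phi.
Proof. by []. Qed.

Lemma sHf p k : smooth (Hf p k).
Proof. by case: k => [v|]; apply: smooth_ipd. Qed.

Lemma FelE : Fel g1 f phi = (fun y => \sum_p \prod_k Hf p k y).
Proof.
apply/funext => y; rewrite /Fel pair_bigA; apply: eq_bigr => p _.
by rewrite big_option_prod mulrC.
Qed.

Lemma perm_root (iv2 : {ffun 'I_(nn g2) -> 'I_d}) (jl2 : {ffun 'I_(nl g2) -> 'I_d}) :
  perm_eq (dseq iv2 jl2 None) (map (labE iv2 jl2) (enum {: rootpred g2 + rootends g2})).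
Proof.
apply/permP => P; rewrite count_dseq -(filter_predT (enum _)) count_ms big_sumType.
have e1 : \sum_(w | @succ g2 w == None) (P (iv2 w) : nat) =
    \sum_(w : rootpred g2 | xpredT w) (P (iv2 (val w)) : nat).
  rewrite (@sum_sub _ _ xpredT (fun w => (P (iv2 w) : nat))).
  by apply: eq_bigl => w; case: insubP => [w' -> _|/negbTE ->].
have e2 : \sum_(e : 'I_(nl g2) * bool | @lend g2 e == None) (P (jl2 e.1) : nat) =
    \sum_(e : rootends g2 | xpredT e) (P (jl2 (val e).1) : nat).
  rewrite (@sum_sub _ _ xpredT (fun e => (P (jl2 e.1) : nat))).
  by apply: eq_bigl => w; case: insubP => [w' -> _|/negbTE ->].
by rewrite e1 e2.
Qed.


Lemma term_eq (vp : {ffun rootpred g2 -> option 'I_(nn g1)})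
  (ps : {ffun rootends g2 -> option 'I_(nn g1)})
  (a1 : {ffun 'I_(nn g1) -> 'I_d}) (a2 : {ffun 'I_(nn g2) -> 'I_d})
  (b1 : {ffun 'I_(nl g1) -> 'I_d}) (b2 : {ffun 'I_(nl g2) -> 'I_d}) (x : V) :
  (\prod_(v : 'I_(nn (graft vp ps)))
     ipd (dseq (g := graft vp ps) (fjoin a1 a2) (fjoin b1 b2) (Some v))
         (f (fjoin a1 a2 v)) x)
  * ipd (dseq (g := graft vp ps) (fjoin a1 a2) (fjoin b1 b2) None) phi x
  = (\prod_(v2 : 'I_(nn g2)) ipd (dseq a2 b2 (Some v2)) (f (a2 v2)) x)
    * \prod_(k : option 'I_(nn g1))
        ipd (map (labE a2 b2)
               [seq e <- enum {: rootpred g2 + rootends g2} | fglue vp ps e == k])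
            (Hf (a1, b1) k) x.
Proof.
rewrite big_split_ord big_option_prod.
pose M := fun k => map (labE a2 b2)
   [seq e <- enum {: rootpred g2 + rootends g2} | fglue vp ps e == k].
have e1 : \prod_(v1 : 'I_(nn g1))
    ipd (dseq (g := graft vp ps) (fjoin a1 a2) (fjoin b1 b2) (Some (lshift (nn g2) v1)))
        (f (fjoin a1 a2 (lshift (nn g2) v1))) x =
    \prod_(v1 : 'I_(nn g1)) ipd (M (Some v1)) (Hf (a1, b1) (Some v1)) x.
  apply: eq_bigr => v1 _; rewrite fjoin_l HfS -ipd_cat.
  apply: (congr1 (fun F : V -> R => F x)); apply: ipd_perm; first exact: hf.
  exact: (@perm_l g1 g2 vp ps d a1 a2 b1 b2 (Some v1)).
have e2 : \prod_(v2 : 'I_(nn g2))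
    ipd (dseq (g := graft vp ps) (fjoin a1 a2) (fjoin b1 b2) (Some (rshift (nn g1) v2)))
        (f (fjoin a1 a2 (rshift (nn g1) v2))) x =
    \prod_(v2 : 'I_(nn g2)) ipd (dseq a2 b2 (Some v2)) (f (a2 v2)) x.
  apply: eq_bigr => v2 _; rewrite fjoin_r.
  apply: (congr1 (fun F : V -> R => F x)); apply: ipd_perm; first exact: hf.
  exact: (@perm_r g1 g2 vp ps d a1 a2 b1 b2 v2).
have e3 : ipd (dseq (g := graft vp ps) (fjoin a1 a2) (fjoin b1 b2) None) phi x =
    ipd (M None) (Hf (a1, b1) None) x.
  rewrite HfN -ipd_cat.
  apply: (congr1 (fun F : V -> R => F x)); apply: ipd_perm; first exact: hphi.
  exact: (@perm_l g1 g2 vp ps d a1 a2 b1 b2 None).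
rewrite e1 e2 e3.
have gen : forall a b c : R, a * b * c = b * (c * a).
  by move=> a b c; rewrite [RHS]mulrC mulrAC [a * c]mulrC.
exact: gen.
Qed.

End Final.

Theorem mainTheorem1 (R : realType) (d : nat) (hd : (0 < d)%N)
    (f : 'I_d -> 'rV[R]_d -> R) (phi : 'rV[R]_d -> R)
    (hf : forall i : 'I_d, smooth (f i)) (hphi : smooth phi)
    (g1 g2 : eaforest) (x : 'rV[R]_d) :
  Fel g2 f (Fel g1 f phi) x =
  \sum_(vp : {ffun rootpred g2 -> option 'I_(nn g1)})
  \sum_(ps : {ffun rootends g2 -> option 'I_(nn g1)})
     Fel (graft vp ps) f phi x.
Proof.
pose Z := fun (a1 : {ffun 'I_(nn g1) -> 'I_d}) (a2 : {ffun 'I_(nn g2) -> 'I_d})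
  (b1 : {ffun 'I_(nl g1) -> 'I_d}) (b2 : {ffun 'I_(nl g2) -> 'I_d})
  (vp : {ffun rootpred g2 -> option 'I_(nn g1)})
  (ps : {ffun rootends g2 -> option 'I_(nn g1)}) =>
  (\prod_(v2 : 'I_(nn g2)) ipd (dseq a2 b2 (Some v2)) (f (a2 v2)) x)
    * \prod_(k : option 'I_(nn g1))
        ipd (map (labE a2 b2)
               [seq e <- enum {: rootpred g2 + rootends g2} | fglue vp ps e == k])
            (@Hf R d f phi g1 (a1, b1) k) x.
transitivity (\sum_(a2 : {ffun 'I_(nn g2) -> 'I_d}) \sum_(b2 : {ffun 'I_(nl g2) -> 'I_d})
   \sum_(p : {ffun 'I_(nn g1) -> 'I_d} * {ffun 'I_(nl g1) -> 'I_d})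
   \sum_(vp : {ffun rootpred g2 -> option 'I_(nn g1)})
   \sum_(ps : {ffun rootends g2 -> option 'I_(nn g1)}) Z p.1 a2 p.2 b2 vp ps).
  rewrite (@FelE R d f phi g1) /Fel.
  apply: eq_bigr => a2 _; apply: eq_bigr => b2 _.
  rewrite (@ipd_perm R d _ _ _ (@smooth_sp R d _ _ _ (@sHf R d f phi hf hphi g1))
             (@perm_root d g2 a2 b2)).
  rewrite (@leibE R d _ _ _ _ _ (@sHf R d f phi hf hphi g1)) big_distrr.
  apply: eq_bigr => -[a1 b1] _.
  rewrite sum_ffun_glue big_distrr; apply: eq_bigr => vp _.
  rewrite big_distrr; apply: eq_bigr => ps _.
  by [].
rewrite reorder.
apply: eq_bigr => vp _; apply: eq_bigr => ps _.
rewrite /Fel sum_ffun_join; apply: eq_bigr => a1 _; apply: eq_bigr => a2 _.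
rewrite sum_ffun_join; apply: eq_bigr => b1 _; apply: eq_bigr => b2 _.

exact: (esym (@term_eq R d f phi hf hphi g1 g2 vp ps a1 a2 b1 b2 x)).
Qed.
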